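(* Let $\mathcal{D}$ be either the free associative algebra $\mathbb{K}\langle d_1,d_2,\dots\rangle$ or the commutative polynomial algebra $\mathbb{K}[d_1,d_2,\dots]$, and let $B_n$ be the Bell polynomials in $\mathcal{D}$. Then $B_0=\mathbb{I}$ and, for all $n\ge0$, $$B_{n+1}=\sum_{k=0}^n\binom{n}{k}B_{n-k}\,d_{k+1}.$$
   Context: $\mathbb{I}$ denotes the unit (empty word) of $\mathcal{D}$. Let $\partial:\mathcal{D}\to\mathcal{D}$ be the linear derivation with $\partial(d_i)=d_{i+1}$, extended by the Leibniz rule $\partial(uv)=\partial(u)v+u\partial(v)$. The Bell polynomials are defined by $B_0=\mathbb{I}$ and $B_n=(d_1+\partial)B_{n-1}=d_1B_{n-1}+\partial(B_{n-1})$ for $n>0$. *)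

(* Defs.v *)
From HB Require Import structures.
From mathcomp Require Import all_boot all_order all_algebra.
From mathcomp.multinomials Require Import monalg.
Set Implicit Arguments. Unset Strict Implicit. Unset Printing Implicit Defensive.
Import GRing.Theory.
Local Open Scope ring_scope.

(* The algebra D is the monoid algebra {malg K[M]} over a monoid of monomials M:
   - M = {fmonom nat} (words in the letters) gives the free associative algebra
     K<d_1,d_2,...>;
   - M = {cmonom nat} (commutative monomials) gives K[d_1,d_2,...].
   The letter with index j : nat (i.e. the monomial fmu j, resp. ucm j) stands
   for the variable d_(j+1). *)

Definition dfree (K : fieldType) (j : nat) : {malg K[{fmonom nat}]} := << fmu j >>.
Definition dcomm (K : fieldType) (j : nat) : {malg K[{cmonom nat}]} := << ucm j >>.

Definition is_bell_derivation (K : fieldType) (M : monomType)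
    (d : nat -> {malg K[M]}) (D : {malg K[M]} -> {malg K[M]}) : Prop :=
  [/\ forall (a : K) (u v : {malg K[M]}), D (a *: u + v) = a *: D u + D v,
      forall j, D (d j) = d j.+1
    & forall u v : {malg K[M]}, D (u * v) = D u * v + u * D v].

Fixpoint bell (K : fieldType) (M : monomType) (d : nat -> {malg K[M]})
    (D : {malg K[M]} -> {malg K[M]}) (n : nat) : {malg K[M]} :=
  match n with
  | 0 => 1
  | n'.+1 => d 0 * bell d D n' + D (bell d D n')
  end.

(* Main.v *)
Require Import Defs.
From HB Require Import structures.
From mathcomp Require Import all_boot all_order all_algebra.
From mathcomp.multinomials Require Import monalg.
Import GRing.Theory.
Local Open Scope ring_scope.


Lemma bell_rec (K : fieldType) (M : monomType) (d : nat -> {malg K[M]}) D :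
  is_bell_derivation d D -> forall n : nat,
  bell d D n.+1 = \sum_(k < n.+1) (bell d D (n - k) * d k) *+ 'C(n, k).
Proof.
case=> Dlin Dd DM.
have DD u v : D (u + v) = D u + D v by have := Dlin 1 u v; rewrite !scale1r.
have D0 : D 0 = 0.
  by apply: (addrI (D 0)); rewrite -DD !addr0.
have DS (I : Type) (r : seq I) (F : I -> _) : D (\sum_(i <- r) F i) = \sum_(i <- r) D (F i).
  by apply: (big_morph D DD D0).
have DN u m : D (u *+ m) = D u *+ m.
  by elim: m => [|m IH]; rewrite ?mulr0n // !mulrS DD IH.
elim=> [|n IH].
  have D1 : D 1 = 0.
    by have := DM 1 1; rewrite mulr1 mulr1 mul1r => h; apply: (addrI (D 1)); rewrite -h addr0.
  by rewrite big_ord1 /= bin0 mulr1n D1 mulr1 mul1r addr0.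
have -> : bell d D n.+2 = d 0 * bell d D n.+1 + D (bell d D n.+1) by [].
rewrite IH DS mulr_sumr -big_split /=.
under eq_bigr => i _ do rewrite DN DM mulrnAr -mulrnDl addrA mulrA -mulrDl Dd.
under eq_bigr => i _ do rewrite mulrnDl.
rewrite big_split /=.
rewrite [in RHS]big_ord_recl /= bin0 mulr1n.
under [X in _ = _ + X]eq_bigr => i _ do rewrite /bump leq0n add1n.
under [X in _ = _ + X]eq_bigr => i _ do rewrite binS mulrnDr subSS.
rewrite big_split /= addrA; congr (_ + _).
  rewrite big_ord_recl /= bin0 mulr1n subn0; congr (_ + _).
  rewrite big_ord_recr /= subnn bin_small // mulr0n addr0.
  apply: eq_bigr => i _.
  have Hi : (i < n)%N by [].
  rewrite /bump leq0n add1n.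
  by have -> : (n - i = (n - i.+1).+1)%N by rewrite subnS prednK // subn_gt0.
Qed.

(* dfree K j, dcomm K j denote d_(j+1); so d_(k+1) is written (d k). *)
Theorem mainTheorem4 (K : fieldType) :
  (forall D : {malg K[{fmonom nat}]} -> {malg K[{fmonom nat}]},
     is_bell_derivation (dfree K) D ->
     bell (dfree K) D 0 = 1 /\
     forall n : nat,
       bell (dfree K) D n.+1 =
       \sum_(k < n.+1) (bell (dfree K) D (n - k) * dfree K k) *+ 'C(n, k))
  /\
  (forall D : {malg K[{cmonom nat}]} -> {malg K[{cmonom nat}]},
     is_bell_derivation (dcomm K) D ->
     bell (dcomm K) D 0 = 1 /\
     forall n : nat,
       bell (dcomm K) D n.+1 =
       \sum_(k < n.+1) (bell (dcomm K) D (n - k) * dcomm K k) *+ 'C(n, k)).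
Proof.
by split=> D HD; split=> //; apply: bell_rec.
Qed.
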